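(* (1) Let $(w_n)_{n\ge1}$ be a bounded sequence of positive reals with $\lim_{n\to\infty}w_1w_2\cdots w_n=\infty$. Then the unilateral backward shift $B_w$ on $\ell^\infty$, $(B_wy)_n=w_{n+1}y_{n+1}$, is frequently hypercyclic with respect to the weak$^*$-topology $\sigma(\ell^\infty,\ell^1)$. (2) Let $(w_n)_{n\in\mathbb{Z}}$ be a bounded sequence of positive reals with $\lim_{n\to\infty}w_1w_2\cdots w_n=\infty$ and $\lim_{n\to\infty}w_{-1}w_{-2}\cdots w_{-n}=0$. Then the bilateral backward shift $T_w$ on $\ell^\infty(\mathbb{Z})$, $(T_wy)_n=w_{n+1}y_{n+1}$ ($n\in\mathbb{Z}$), is frequently hypercyclic with respect to the weak$^*$-topology $\sigma(\ell^\infty(\mathbb{Z}),\ell^1(\mathbb{Z}))$.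
   Context: An operator $T$ on a topological vector space $(Y,\tau)$ is frequently hypercyclic with respect to $\tau$ if there is $y\in Y$ such that for every nonempty $\tau$-open $U$ the set $A=\{n\in\mathbb{N}:T^ny\in U\}$ has positive lower density $\liminf_{N\to\infty}\mathrm{card}\{n\in A:n\le N\}/N>0$. *)

(* Defs.v *)
From Stdlib Require Import Reals Lra Lia ZArith Arith List ClassicalEpsilon.
Open Scope R_scope.

(* Sequences are functions I -> R; the index set I comes with an enumeration
   e : nat -> I (a bijection) used to form the (absolutely convergent) sums
   defining the duality between l^1(I) and l^oo(I). *)

Definition is_linf {I : Type} (y : I -> R) : Prop :=
  exists M : R, forall i, Rabs (y i) <= M.

Definition is_l1 {I : Type} (e : nat -> I) (a : I -> R) : Prop :=
  exists L : R, infinite_sum (fun k => Rabs (a (e k))) L.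

Definition pairing_is {I : Type} (e : nat -> I) (a y : I -> R) (l : R) : Prop :=
  infinite_sum (fun k => a (e k) * y (e k)) l.

Definition weak_star_open {I : Type} (e : nat -> I) (U : (I -> R) -> Prop) : Prop :=
  (forall y, U y -> is_linf y) /\
  forall y, U y ->
    exists (As : list (I -> R)) (eps : R),
      0 < eps /\ Forall (is_l1 e) As /\
      forall z, is_linf z ->
        (forall a, In a As ->
           exists l, pairing_is e a (fun i => z i - y i) l /\ Rabs l < eps) ->
        U z.

Fixpoint card_upto (A : nat -> Prop) (N : nat) : nat :=
  match N with
  | O => O
  | S N' => (if excluded_middle_informative (A (S N')) then 1 else 0)
            + card_upto A N'
  end%nat.

Definition pos_lower_density (A : nat -> Prop) : Prop :=
  exists delta : R, 0 < delta /\
    exists N0 : nat, forall N : nat, (N0 <= N)%nat -> (1 <= N)%nat ->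
      delta <= INR (card_upto A N) / INR N.

Definition freq_hypercyclic_weak_star {I : Type} (e : nat -> I)
    (T : (I -> R) -> (I -> R)) : Prop :=
  exists y : I -> R, is_linf y /\
    forall U : (I -> R) -> Prop,
      weak_star_open e U -> (exists z, U z) ->
      pos_lower_density (fun n => U (Nat.iter n T y)).

Definition zenum (n : nat) : Z :=
  if Nat.even n then Z.of_nat (n / 2) else (- Z.of_nat ((n + 1) / 2))%Z.

(* Unilateral weighted backward shift. Paper indices n >= 1 are shifted to
   k = n - 1 >= 0: y k = y_{k+1}, w k = w_{k+1}; then (B_w y)_n = w_{n+1} y_{n+1}
   becomes (B w y) k = w (k+1) * y (k+1). *)
Definition uni_shift (w : nat -> R) (y : nat -> R) : nat -> R :=
  fun k => w (S k) * y (S k).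

Definition bi_shift (w : Z -> R) (y : Z -> R) : Z -> R :=
  fun n => w (n + 1)%Z * y (n + 1)%Z.

(* w_1 w_2 ... w_n in the shifted nat indexing: prod_{k<n} w k *)
Fixpoint prod_first (w : nat -> R) (n : nat) : R :=
  match n with O => 1 | S m => prod_first w m * w m end.

(* Main.v *)
Require Import Defs.
From Stdlib Require Import Reals ZArith.
From Stdlib Require Import Lra Lia Arith List ClassicalEpsilon FunctionalExtensionality.
Open Scope R_scope.


Lemma cu_monoA (A B : nat -> Prop) N :
  (forall n, A n -> B n) -> (card_upto A N <= card_upto B N)%nat.
Proof.
  intros H; induction N as [|N IH]; simpl; [lia|].
  destruct (excluded_middle_informative (A (S N))) as [a|a];
  destruct (excluded_middle_informative (B (S N))) as [b|b]; try lia.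
  exfalso; apply b, H, a.
Qed.

Lemma cu_monoN (A : nat -> Prop) a b :
  (a <= b)%nat -> (card_upto A a <= card_upto A b)%nat.
Proof.
  intros H; induction H as [|b H IH]; [lia|]; simpl.
  destruct (excluded_middle_informative (A (S b))); lia.
Qed.

Lemma cu_step (A : nat -> Prop) a b :
  (a < b)%nat -> A b -> (card_upto A a + 1 <= card_upto A b)%nat.
Proof.
  intros H Hb. destruct b as [|b]; [lia|]. simpl.
  destruct (excluded_middle_informative (A (S b))) as [_|n]; [|contradiction].
  pose proof (cu_monoN A a b ltac:(lia)). lia.
Qed.

Lemma pld_mono (A B : nat -> Prop) :
  (forall n, A n -> B n) -> pos_lower_density A -> pos_lower_density B.
Proof.
  intros H [d [Hd [N0 HN]]]. exists d; split; [exact Hd|]. exists N0.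
  intros N H1 H2. specialize (HN N H1 H2).
  pose proof (cu_monoA A B N H) as Hc. apply le_INR in Hc.
  assert (0 < INR N) by (apply lt_0_INR; lia).
  apply Rle_trans with (1 := HN). unfold Rdiv.
  apply Rmult_le_compat_r; [left; apply Rinv_0_lt_compat; lra| exact Hc].
Qed.

Lemma lim_abs_le u l K : Un_cv u l -> (forall n, Rabs (u n) <= K) -> Rabs l <= K.
Proof.
  intros Hu Hb. destruct (Rle_or_lt (Rabs l) K) as [h|h]; [exact h|].
  destruct (Hu (Rabs l - K)) as [N HN]; [lra|].
  specialize (HN N (Nat.le_refl N)). specialize (Hb N). unfold Rdist in HN.
  pose proof (Rabs_triang_inv l (u N)). rewrite Rabs_minus_sym in HN. lra.
Qed.

Lemma sum_nonneg_le_lim (al : nat -> R) L :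
  (forall j, 0 <= al j) -> Un_cv (sum_f_R0 al) L -> forall n, sum_f_R0 al n <= L.
Proof.
  intros H0 Hc n. apply (growing_ineq (sum_f_R0 al)); [|exact Hc].
  intro m. simpl. specialize (H0 (S m)). lra.
Qed.

Lemma sum_tail_eq (al : nat -> R) B N n :
  sum_f_R0 (fun j => if (j <=? N)%nat then 0 else B * al j) n =
  if (n <=? N)%nat then 0 else B * (sum_f_R0 al n - sum_f_R0 al N).
Proof.
  induction n as [|n IH].
  - simpl. destruct (0 <=? N)%nat eqn:E; [reflexivity|]. apply Nat.leb_nle in E; lia.
  - change (sum_f_R0 ?f (S n)) with (sum_f_R0 f n + f (S n)). rewrite IH.
    destruct (Nat.leb_spec n N); destruct (Nat.leb_spec (S n) N); try lia.
    + ring.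
    + assert (n = N) by lia. subst. ring.
    + ring.
Qed.

Lemma tail1 {I : Type} (e : nat -> I) (a : I -> R) (B eps : R) :
  is_l1 e a -> 0 <= B -> 0 < eps ->
  exists J dl0, 0 < dl0 /\ forall dl : I -> R,
    (forall i, Rabs (dl i) <= B) ->
    (forall j, (j < J)%nat -> Rabs (dl (e j)) < dl0) ->
    exists l, pairing_is e a dl l /\ Rabs l < eps.
Proof.
  intros [L HL] HB He.
  set (al := fun j => Rabs (a (e j))).
  assert (Hal0 : forall j, 0 <= al j) by (intro; apply Rabs_pos).
  assert (HL0 : 0 <= L).
  { apply Rle_trans with (al 0%nat); [apply Hal0|].
    apply (sum_nonneg_le_lim al L Hal0 HL 0). }
  set (eta := eps / (2 * (B + 1))).
  assert (Heta : 0 < eta) by (unfold eta; apply Rdiv_lt_0_compat; lra).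
  destruct (HL eta Heta) as [N HN].
  set (d0 := eps / (2 * (L + 1))).
  assert (Hd0 : 0 < d0) by (unfold d0; apply Rdiv_lt_0_compat; lra).
  exists (S N), d0. split; [exact Hd0|]. intros dl Hb Hs.
  set (b := fun j => a (e j) * dl (e j)).
  assert (Hbb : forall j, Rabs (b j) <= B * al j).
  { intro j. unfold b, al. rewrite Rabs_mult. rewrite Rmult_comm.
    apply Rmult_le_compat_r; [apply Rabs_pos| apply Hb]. }
  assert (Hconv : {l | Un_cv (fun n => sum_f_R0 b n) l}).
  { apply cv_cauchy_2, cauchy_abs, cv_cauchy_1.
    apply (Rseries_CV_comp _ (fun j => B * al j)).
    - intro n; split; [apply Rabs_pos| apply Hbb].
    - exists (B * L). intros eps' He'.
      destruct (Req_dec B 0) as [HB0|HB0].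
      + exists 0%nat. intros n _. unfold Rdist.
        replace (sum_f_R0 (fun j => B * al j) n) with (B * sum_f_R0 al n).
        2:{ rewrite scal_sum. apply sum_eq. intros; ring. }
        rewrite HB0. rewrite Rmult_0_l, Rmult_0_l, Rminus_0_r, Rabs_R0. lra.
      + destruct (HL (eps' / B)) as [M HM]; [apply Rdiv_lt_0_compat; lra|].
        exists M. intros n Hn. specialize (HM n Hn). unfold Rdist in *.
        replace (sum_f_R0 (fun j => B * al j) n) with (B * sum_f_R0 al n).
        2:{ rewrite scal_sum. apply sum_eq. intros; ring. }
        rewrite <- Rmult_minus_distr_l, Rabs_mult, (Rabs_right B) by lra.
        apply Rmult_lt_compat_l with (r := B) in HM; [|lra].
        replace (B * (eps' / B)) with eps' in HM by (field; lra). exact HM. }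
  destruct Hconv as [l Hl]. exists l. split; [exact Hl|].
  set (K := d0 * L + B * eta).
  assert (HK : K < eps).
  { unfold K, d0, eta.
    assert (eps / (2 * (L + 1)) * L < eps / 2).
    { unfold Rdiv. rewrite Rinv_mult. 
      assert (0 < / (L+1)) by (apply Rinv_0_lt_compat; lra).
      assert (L * / (L+1) < 1).
      { apply (Rmult_lt_reg_r (L+1)); [lra|]. rewrite Rmult_assoc, Rinv_l by lra. lra. }
      replace (eps * (/ 2 * / (L + 1)) * L) with (eps * / 2 * (L * / (L+1))) by ring.
      pose proof (Rmult_lt_compat_l (eps * / 2) _ _ ltac:(lra) H0). lra. }
    assert (B * (eps / (2 * (B + 1))) < eps / 2).
    { unfold Rdiv. rewrite Rinv_mult.
      assert (B * / (B+1) < 1).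
      { apply (Rmult_lt_reg_r (B+1)); [lra|]. rewrite Rmult_assoc, Rinv_l by lra. lra. }
      replace (B * (eps * (/ 2 * / (B + 1)))) with (eps * / 2 * (B * / (B+1))) by ring.
      pose proof (Rmult_lt_compat_l (eps * / 2) _ _ ltac:(lra) H0). lra. }
    lra. }
  apply Rle_lt_trans with K; [|exact HK].
  apply (lim_abs_le _ _ _ Hl). intro n.
  apply Rle_trans with (1 := sum_f_R0_triangle b n).
  set (g := fun j => if (j <=? N)%nat then 0 else B * al j).
  apply Rle_trans with (sum_f_R0 (fun j => d0 * al j + g j) n).
  { apply sum_Rle. intros j _. unfold g. destruct (Nat.leb_spec j N).
    - unfold b, al. rewrite Rabs_mult. rewrite Rplus_0_r, (Rmult_comm d0).
      apply Rmult_le_compat_l; [apply Rabs_pos|]. left; apply Hs; lia.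
    - pose proof (Hbb j). assert (0 <= d0 * al j) by (apply Rmult_le_pos; [lra|apply Hal0]). lra. }
  rewrite sum_plus. replace (sum_f_R0 (fun j => d0 * al j) n) with (d0 * sum_f_R0 al n) by (rewrite scal_sum; apply sum_eq; intros; ring). unfold g; rewrite (sum_tail_eq al B N n).
  pose proof (sum_nonneg_le_lim al L Hal0 HL n) as H1.
  pose proof (HN N (Nat.le_refl N)) as H2. unfold Rdist in H2.
  pose proof (sum_nonneg_le_lim al L Hal0 HL N) as H3.
  change (sum_f_R0 (fun k => Rabs (a (e k))) N) with (sum_f_R0 al N) in H2.
  assert (L - sum_f_R0 al N < eta) by (rewrite Rabs_minus_sym, Rabs_right in H2; lra).
  unfold K.
  assert (d0 * sum_f_R0 al n <= d0 * L) by (apply Rmult_le_compat_l; lra).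
  destruct (n <=? N)%nat.
  - assert (0 <= B * eta) by (apply Rmult_le_pos; lra). lra.
  - assert (B * (sum_f_R0 al n - sum_f_R0 al N) <= B * eta).
    { apply Rmult_le_compat_l; lra. } lra.
Qed.

Lemma tailL {I : Type} (e : nat -> I) (B eps : R) (As : list (I -> R)) :
  Forall (is_l1 e) As -> 0 <= B -> 0 < eps ->
  exists J dl0, 0 < dl0 /\ forall dl : I -> R,
    (forall i, Rabs (dl i) <= B) ->
    (forall j, (j < J)%nat -> Rabs (dl (e j)) < dl0) ->
    forall a, In a As -> exists l, pairing_is e a dl l /\ Rabs l < eps.
Proof.
  intros HF HB He. induction HF as [|a As Ha HF IH].
  - exists 0%nat, 1. split; [lra|]. intros dl _ _ a [].
  - destruct IH as [J1 [d1 [Hd1 H1]]].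
    destruct (tail1 e a B eps Ha HB He) as [J2 [d2 [Hd2 H2]]].
    exists (Nat.max J1 J2), (Rmin d1 d2). split; [apply Rmin_pos; lra|].
    intros dl Hb Hs a' [<-|Hin].
    + apply H2; [exact Hb|]. intros j Hj.
      eapply Rlt_le_trans; [apply Hs; lia| apply Rmin_r].
    + apply H1; [exact Hb| |exact Hin]. intros j Hj.
      eapply Rlt_le_trans; [apply Hs; lia| apply Rmin_l].
Qed.

Fixpoint decf (f m : nat) : nat * nat :=
  match f with
  | O => (0%nat, 0%nat)
  | S f' => if Nat.even m then let p := decf f' (Nat.div2 m) in (S (fst p), snd p)
            else (0%nat, Nat.div2 m)
  end.
Definition dec (m : nat) : nat * nat := decf m m.

Lemma decf_S f m : decf (S f) m =
  if Nat.even m then let p := decf f (Nat.div2 m) in (S (fst p), snd p)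
  else (0%nat, Nat.div2 m).
Proof. reflexivity. Qed.

Lemma decf_spec a u f : (a < f)%nat -> decf f (2 ^ a * (2 * u + 1)) = (a, u).
Proof.
  revert f; induction a as [|a IH]; intros f Hf; destruct f as [|f]; try lia.
  - rewrite Nat.pow_0_r, Nat.mul_1_l, decf_S.
    rewrite Nat.even_odd, Nat.div2_odd'. reflexivity.
  - replace (2 ^ S a * (2 * u + 1))%nat with (2 * (2 ^ a * (2 * u + 1)))%nat
      by (rewrite Nat.pow_succ_r'; lia).
    rewrite decf_S, Nat.even_even, Nat.div2_double, IH by lia. reflexivity.
Qed.

Lemma dec_spec a u : dec (2 ^ a * (2 * u + 1)) = (a, u).
Proof.
  unfold dec. apply decf_spec. pose proof (Nat.pow_gt_lin_r 2 a ltac:(lia)). nia.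
Qed.

Lemma dec_exists m : (1 <= m)%nat -> exists a u, m = (2 ^ a * (2 * u + 1))%nat.
Proof.
  induction m as [m IH] using lt_wf_ind. intros Hm.
  destruct (Nat.Even_or_Odd m) as [[k Hk]|[k Hk]].
  - destruct (IH k ltac:(lia) ltac:(lia)) as [a [u Hau]].
    exists (S a), u. rewrite Nat.pow_succ_r'. lia.
  - exists 0%nat, k. simpl. lia.
Qed.

Definition v (s : nat) : nat := fst (dec s).

Lemma v_spec a u : v (2 ^ a * (2 * u + 1)) = a.
Proof. unfold v; rewrite dec_spec; reflexivity. Qed.

Lemma v_odd j : v (2 * j + 1) = 0%nat.
Proof. replace (2 * j + 1)%nat with (2 ^ 0 * (2 * j + 1))%nat by (simpl; lia). apply v_spec. Qed.

Lemma v_even j : (1 <= j)%nat -> v (2 * j) = S (v j).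
Proof.
  intros Hj. destruct (dec_exists j Hj) as [a [u ->]].
  replace (2 * (2 ^ a * (2 * u + 1)))%nat with (2 ^ S a * (2 * u + 1))%nat
    by (rewrite Nat.pow_succ_r'; lia).
  rewrite !v_spec. reflexivity.
Qed.

Lemma v_0 : v 0 = 0%nat.
Proof. reflexivity. Qed.

Fixpoint Vs (s : nat) : nat := match s with O => O | S s' => (Vs s' + v (S s'))%nat end.

Lemma Vs_S s : Vs (S s) = (Vs s + v (S s))%nat.
Proof. reflexivity. Qed.

Lemma Vs_half j : Vs (2 * j) = (j + Vs j)%nat /\ Vs (2 * j + 1) = (j + Vs j)%nat.
Proof.
  induction j as [|j [IH1 IH2]].
  - split; reflexivity.
  - assert (E1 : Vs (2 * S j) = (S j + Vs (S j))%nat).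
    { replace (2 * S j)%nat with (S (2 * j + 1)) by lia. rewrite Vs_S.
      rewrite IH2. replace (S (2 * j + 1)) with (2 * S j)%nat by lia.
      rewrite v_even by lia. rewrite (Vs_S j). lia. }
    split; [exact E1|].
    replace (2 * S j + 1)%nat with (S (2 * S j)) by lia. rewrite Vs_S.
    rewrite E1. replace (S (2 * S j)) with (2 * S j + 1)%nat by lia.
    rewrite v_odd. lia.
Qed.

Lemma Vs_le s : (Vs s <= s)%nat.
Proof.
  induction s as [s IH] using lt_wf_ind.
  destruct (Nat.Even_or_Odd s) as [[j Hj]|[j Hj]]; subst.
  - destruct j as [|j]; [simpl; lia|]. rewrite (proj1 (Vs_half _)).
    pose proof (IH (S j) ltac:(lia)). lia.
  - rewrite (proj2 (Vs_half _)). destruct j as [|j]; [simpl; lia|].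
    pose proof (IH (S j) ltac:(lia)). lia.
Qed.

Fixpoint spos (s : nat) : nat :=
  match s with O => O | S s' => (spos s' + v s' + v (S s') + 2)%nat end.

Lemma pos_S s : spos (S s) = (spos s + v s + v (S s) + 2)%nat.
Proof. reflexivity. Qed.

Lemma pos_bound s : (spos s + v s <= 2 * s + 2 * Vs s)%nat.
Proof. induction s as [|s IH]; [change (spos 0) with 0%nat; change (Vs 0) with 0%nat; rewrite v_0; lia|]. rewrite pos_S, Vs_S. lia. Qed.

Lemma pos_le4 s : (spos s <= 4 * s)%nat.
Proof. pose proof (pos_bound s); pose proof (Vs_le s); lia. Qed.

Lemma pos_sep s s' : (s < s')%nat -> (spos s + v s + v s' + 2 <= spos s')%nat.
Proof.
  intros H; induction H as [|s' H IH]; rewrite pos_S; lia.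
Qed.

Section Prod.
Variable w : Z -> R.
Hypothesis wpos : forall n, 0 < w n.

Fixpoint Pi (a : Z) (d : nat) : R :=
  match d with O => 1 | S d' => w (a + 1)%Z * Pi (a + 1)%Z d' end.

Lemma Pi_pos a d : 0 < Pi a d.
Proof. revert a; induction d; intros a; simpl; [lra|]. apply Rmult_lt_0_compat; auto. Qed.

Lemma Pi_add a d1 d2 : Pi a (d1 + d2) = Pi a d1 * Pi (a + Z.of_nat d1)%Z d2.
Proof.
  revert a; induction d1 as [|d1 IH]; intros a; simpl.
  - rewrite Z.add_0_r; ring.
  - rewrite IH. replace (a + 1 + Z.of_nat d1)%Z with (a + Z.pos (Pos.of_succ_nat d1))%Z by lia.
    ring.
Qed.

Lemma Pi_eq a b d : a = b -> Pi a d = Pi b d.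
Proof. intros ->; reflexivity. Qed.

Lemma iter_bi n (y : Z -> R) k :
  Nat.iter n (bi_shift w) y k = Pi k n * y (k + Z.of_nat n)%Z.
Proof.
  revert k; induction n as [|n IH]; intros k; simpl.
  - rewrite Z.add_0_r; ring.
  - unfold bi_shift. rewrite IH.
    replace (k + 1 + Z.of_nat n)%Z with (k + Z.pos (Pos.of_succ_nat n))%Z by lia. ring.
Qed.

Lemma prod_pos_eq m : prod_first (fun k => w (Z.of_nat (S k))) m = Pi 0 m.
Proof.
  induction m as [|m IH]; [reflexivity|].
  change (prod_first (fun k => w (Z.of_nat (S k))) (S m)) with
    (prod_first (fun k => w (Z.of_nat (S k))) m * w (Z.of_nat (S m))).
  rewrite IH. replace (Pi 0 (S m)) with (Pi 0 (m + 1)) by (f_equal; lia). rewrite Pi_add.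
  change (Pi (0 + Z.of_nat m)%Z 1) with (w (0 + Z.of_nat m + 1)%Z * 1).
  replace (0 + Z.of_nat m + 1)%Z with (Z.of_nat (S m)) by lia. ring.
Qed.

Definition negp (m : nat) : R := Pi (- Z.of_nat m - 1)%Z m.

Lemma prod_neg_eq m : prod_first (fun k => w (- Z.of_nat (S k))%Z) m = negp m.
Proof.
  unfold negp. induction m as [|m IH]; [reflexivity|].
  change (prod_first (fun k => w (- Z.of_nat (S k))%Z) (S m)) with
    (prod_first (fun k => w (- Z.of_nat (S k))%Z) m * w (- Z.of_nat (S m))%Z).
  rewrite IH.
  change (Pi (- Z.of_nat (S m) - 1)%Z (S m)) with
    (w (- Z.of_nat (S m) - 1 + 1)%Z * Pi (- Z.of_nat (S m) - 1 + 1)%Z m).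
  rewrite (Pi_eq (- Z.of_nat (S m) - 1 + 1) (- Z.of_nat m - 1)) by lia.
  replace (- Z.of_nat (S m) - 1 + 1)%Z with (- Z.of_nat (S m))%Z by lia. ring.
Qed.

Hypothesis hplus : cv_infty (Pi 0).
Hypothesis hminus : Un_cv negp 0.

Lemma Lplus k B : exists D, forall d, (D <= d)%nat -> B <= Pi k d.
Proof.
  destruct (Z_le_gt_dec 0 k) as [Hk|Hk].
  - destruct (Z_of_nat_complete k Hk) as [p ->].
    destruct (hplus (B * Pi 0 p)) as [N HN]. exists N. intros d Hd.
    specialize (HN (p + d)%nat ltac:(lia)). rewrite Pi_add in HN.
    rewrite Z.add_0_l in HN. pose proof (Pi_pos 0 p).
    left. apply (Rmult_lt_reg_l (Pi 0 p)); [lra|]. lra.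
  - set (q := Z.to_nat (- k)). assert (Hq : k = (- Z.of_nat q)%Z) by (unfold q; lia).
    pose proof (Pi_pos k q) as Hp.
    destruct (hplus (B / Pi k q)) as [N HN]. exists (q + N)%nat. intros d Hd.
    specialize (HN (d - q)%nat ltac:(lia)).
    replace d with (q + (d - q))%nat by lia. rewrite Pi_add.
    rewrite (Pi_eq (k + Z.of_nat q) 0) by lia.
    left. apply Rmult_lt_compat_l with (r := Pi k q) in HN; [|lra].
    replace (Pi k q * (B / Pi k q)) with B in HN by (field; lra). exact HN.
Qed.

Lemma negp_pos m : 0 < negp m.
Proof. apply Pi_pos. Qed.

Lemma Lminus k eps : 0 < eps -> exists D, forall d, (D <= d)%nat ->
  Pi (k - Z.of_nat d)%Z d <= eps.
Proof.
  intros He.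
  destruct (Z_le_gt_dec 0 k) as [Hk|Hk].
  - destruct (Z_of_nat_complete k Hk) as [p ->].
    pose proof (Pi_pos (-1) (p + 1)) as Hp.
    destruct (hminus (eps / Pi (-1) (p+1))) as [N HN]; [apply Rdiv_lt_0_compat; lra|].
    exists (p + 1 + N)%nat. intros d Hd.
    specialize (HN (d - p - 1)%nat ltac:(lia)). unfold Rdist in HN.
    rewrite Rminus_0_r, Rabs_right in HN by (left; apply negp_pos). unfold negp in HN.
    replace d with ((d - p - 1) + (p + 1))%nat at 2 by lia. rewrite Pi_add.
    rewrite (Pi_eq (Z.of_nat p - Z.of_nat d) (- Z.of_nat (d - p - 1) - 1)) by lia.
    rewrite (Pi_eq (Z.of_nat p - Z.of_nat d + Z.of_nat (d - p - 1)) (-1)) by lia.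
    left. apply Rmult_lt_compat_r with (r := Pi (-1) (p+1)) in HN; [|lra].
    replace (eps / Pi (-1) (p + 1) * Pi (-1) (p + 1)) with eps in HN by (field; lra).
    exact HN.
  - set (q := Z.to_nat (- k - 1)). assert (Hq : k = (- Z.of_nat q - 1)%Z) by (unfold q; lia).
    pose proof (negp_pos q) as Hp.
    destruct (hminus (eps * negp q)) as [N HN]; [apply Rmult_lt_0_compat; lra|].
    exists N. intros d Hd.
    specialize (HN (d + q)%nat ltac:(lia)). unfold Rdist in HN.
    rewrite Rminus_0_r, Rabs_right in HN by (left; apply negp_pos). unfold negp in HN.
    rewrite Pi_add in HN.
    rewrite (Pi_eq (- Z.of_nat (d + q) - 1 + Z.of_nat d) (- Z.of_nat q - 1)) in HN by lia.
    rewrite (Pi_eq (- Z.of_nat (d + q) - 1) (k - Z.of_nat d)) in HN by lia.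
    fold (negp q) in HN. left.
    apply (Rmult_lt_reg_r (negp q)); [lra|]. exact HN.
Qed.

End Prod.

Definition Nw (t : nat) : nat := fst (dec (S t)).
Definition rw (t : nat) : nat := snd (dec (S t)).
Definition nxt (g : nat) : nat := snd (dec (S g)).
Definition dg (t i : nat) : nat := fst (dec (S (Nat.iter i nxt (rw t)))).
Definition Dof (N : nat) : nat := ((N + 1) * (N + 1))%nat.
Definition xv (t : nat) (k : Z) : R :=
  (INR (dg t (Z.to_nat (k + Z.of_nat (Nw t)))) - INR (Dof (Nw t))) / INR (Nw t + 1).

Lemma S_pow_pred a u : S (2 ^ a * (2 * u + 1) - 1) = (2 ^ a * (2 * u + 1))%nat.
Proof. pose proof (Nat.pow_nonzero 2 a ltac:(lia)). nia. Qed.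

Lemma digits_exist L (d : nat -> nat) :
  exists r, forall i, (i < L)%nat -> fst (dec (S (Nat.iter i nxt r))) = d i.
Proof.
  revert d; induction L as [|L IH]; intros d.
  - exists 0%nat; intros; lia.
  - destruct (IH (fun i => d (S i))) as [r' Hr'].
    exists (2 ^ d 0%nat * (2 * r' + 1) - 1)%nat. intros i Hi. destruct i as [|i].
    + change (Nat.iter 0 nxt ?r) with r. rewrite S_pow_pred, dec_spec. reflexivity.
    + rewrite Nat.iter_succ_r. unfold nxt at 2. rewrite S_pow_pred, dec_spec. simpl snd.
      apply Hr'. lia.
Qed.

Lemma target_exists N (d : nat -> nat) :
  exists t, Nw t = N /\ forall i, (i <= 2 * N)%nat -> dg t i = d i.
Proof.
  destruct (digits_exist (S (2 * N)) d) as [r Hr].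
  exists (2 ^ N * (2 * r + 1) - 1)%nat. unfold Nw, dg, rw.
  rewrite S_pow_pred, dec_spec. simpl. split; [reflexivity|]. intros i Hi. apply Hr. lia.
Qed.

Lemma Rabs_le_inv x a : Rabs x <= a -> - a <= x <= a.
Proof. intros H. pose proof (Rle_abs x). pose proof (Rle_abs (- x)). rewrite Rabs_Ropp in H1. lra. Qed.

Lemma INR_Zto_nat z : (0 <= z)%Z -> INR (Z.to_nat z) = IZR z.
Proof. intros H. rewrite INR_IZR_INZ, Z2Nat.id by exact H. reflexivity. Qed.

Lemma approx (z0 : Z -> R) (M J : nat) (dl : R) :
  0 < dl -> (forall k, Rabs (z0 k) <= INR M) ->
  exists t, (J <= Nw t)%nat /\ forall k, (Z.abs k <= Z.of_nat (Nw t))%Z ->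
    Rabs (xv t k - z0 k) < dl.
Proof.
  intros Hdl Hz.
  set (N := Nat.max J (Nat.max M (Z.to_nat (up (/ dl))))).
  set (D := Dof N).
  set (d := fun i => Z.to_nat (up (INR (N + 1) * z0 (Z.of_nat i - Z.of_nat N)%Z) + Z.of_nat D)).
  destruct (target_exists N d) as [t [Ht Hdg]].
  exists t. rewrite Ht. split; [unfold N; lia|].
  intros k Hk. unfold xv. rewrite Ht.
  set (i := Z.to_nat (k + Z.of_nat N)).
  assert (Hi : (i <= 2 * N)%nat) by (unfold i; lia).
  rewrite (Hdg i Hi). unfold d.
  replace (Z.of_nat i - Z.of_nat N)%Z with k by (unfold i; lia).
  set (x := INR (N + 1) * z0 k).
  assert (HN1 : 0 < INR (N + 1)) by (apply lt_0_INR; lia).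
  assert (HMN : (M <= N)%nat) by (unfold N; lia).
  assert (HD : INR D = INR (N + 1) * INR (N + 1)) by (unfold D, Dof; rewrite mult_INR; reflexivity).
  destruct (archimed x) as [Hu1 Hu2].
  assert (Hx : - INR D <= x).
  { unfold x. pose proof (Hz k) as Hzk. apply Rabs_le_inv in Hzk.
    assert (INR M <= INR (N + 1)) by (apply le_INR; lia).
    rewrite HD. assert (0 <= INR M) by apply pos_INR. nra. }
  assert (Hpos : (0 <= up x + Z.of_nat D)%Z).
  { apply le_IZR. rewrite plus_IZR, <- INR_IZR_INZ. simpl. lra. }
  rewrite INR_Zto_nat by exact Hpos. rewrite plus_IZR, <- INR_IZR_INZ. change (Dof N) with D.
  replace ((IZR (up x) + INR D - INR D) / INR (N + 1) - z0 k) with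
    ((IZR (up x) - x) / INR (N + 1)) by (unfold x; field; lra).
  rewrite Rabs_right.
  2:{ apply Rle_ge, Rmult_le_pos; [lra| left; apply Rinv_0_lt_compat; lra]. }
  apply Rle_lt_trans with (1 / INR (N + 1)).
  { unfold Rdiv. apply Rmult_le_compat_r; [left; apply Rinv_0_lt_compat; lra| lra]. }
  assert (/ dl < INR (N + 1)).
  { destruct (archimed (/ dl)) as [Ha _].
    assert (IZR (up (/ dl)) <= INR N).
    { assert (0 <= up (/dl))%Z.
      { apply le_IZR. pose proof (Rinv_0_lt_compat dl Hdl). lra. }
      rewrite <- (INR_Zto_nat _ H). apply le_INR. unfold N; lia. }
    rewrite plus_INR. simpl. lra. }
  apply (Rmult_lt_reg_r (INR (N + 1) * dl)).
  { apply Rmult_lt_0_compat; lra. }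
  replace (1 / INR (N + 1) * (INR (N + 1) * dl)) with dl by (field; lra).
  apply (Rmult_lt_reg_l (/ dl)); [apply Rinv_0_lt_compat; lra|].
  replace (/ dl * dl) with 1 by (field; lra).
  replace (/ dl * (dl * (INR (N + 1) * dl))) with (INR (N+1) * dl) by (field; lra).
  assert (1 = / dl * dl) by (field; lra).
  apply Rmult_lt_compat_r with (r := dl) in H; [|lra]. lra.
Qed.

Lemma fin_max (P : Z -> nat -> Prop) :
  (forall k D D', (D <= D')%nat -> P k D -> P k D') ->
  forall N, (forall k, (Z.abs k <= Z.of_nat N)%Z -> exists D, P k D) ->
  exists D, forall k, (Z.abs k <= Z.of_nat N)%Z -> P k D.
Proof.
  intros Hm N; induction N as [|N IH]; intros Hex.
  - destruct (Hex 0%Z ltac:(lia)) as [D HD]. exists D. intros k Hk.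
    replace k with 0%Z by lia. exact HD.
  - destruct IH as [D1 H1]. { intros k Hk. apply Hex. lia. }
    destruct (Hex (Z.of_nat (S N)) ltac:(lia)) as [D2 H2].
    destruct (Hex (- Z.of_nat (S N))%Z ltac:(lia)) as [D3 H3].
    exists (Nat.max D1 (Nat.max D2 D3)). intros k Hk.
    destruct (Z.eq_dec k (Z.of_nat (S N))) as [->|n1].
    { eapply Hm; [|exact H2]; lia. }
    destruct (Z.eq_dec k (- Z.of_nat (S N))%Z) as [->|n2].
    { eapply Hm; [|exact H3]; lia. }
    eapply Hm; [|apply H1; lia]; lia.
Qed.

Section Core.
Variable w : Z -> R.
Hypothesis wpos : forall n, 0 < w n.
Hypothesis hplus : cv_infty (Pi w 0).
Hypothesis hminus : Un_cv (negp w) 0.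

Definition Hprop (t H : nat) : Prop :=
  (Nw t + 1 <= H)%nat /\ forall k, (Z.abs k <= Z.of_nat (Nw t))%Z -> forall d, (H <= d)%nat ->
    Rabs (xv t k) <= Pi w k d /\ Rabs (xv t k) * Pi w (k - Z.of_nat d)%Z d <= 1.

Lemma H_exists t : exists H, Hprop t H.
Proof.
  set (P := fun k D => forall d, (D <= d)%nat ->
    Rabs (xv t k) <= Pi w k d /\ Rabs (xv t k) * Pi w (k - Z.of_nat d)%Z d <= 1).
  destruct (fin_max P) with (N := Nw t) as [D HD].
  - intros k D D' HDD' HP d Hd. apply HP. lia.
  - intros k _. set (x := Rabs (xv t k)).
    assert (Hx : 0 <= x) by apply Rabs_pos.
    destruct (Lplus w wpos hplus k x) as [D1 H1].
    destruct (Lminus w wpos hminus k (1 / (x + 1))) as [D2 H2].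
    { apply Rdiv_lt_0_compat; lra. }
    exists (Nat.max D1 D2). intros d Hd. split.
    + apply H1; lia.
    + specialize (H2 d ltac:(lia)).
      pose proof (Pi_pos w wpos (k - Z.of_nat d) d).
      apply Rle_trans with (x * (1 / (x + 1))).
      * apply Rmult_le_compat_l; assumption.
      * apply (Rmult_le_reg_r (x + 1)); [lra|].
        replace (x * (1 / (x + 1)) * (x + 1)) with x by (field; lra). lra.
  - exists (Nat.max D (Nw t + 1)). split; [lia|]. intros k Hk d Hd.
    apply (HD k Hk). lia.
Qed.

Definition Hf (t : nat) : nat := proj1_sig (constructive_indefinite_description _ (H_exists t)).
Lemma Hf_spec t : Hprop t (Hf t).
Proof. unfold Hf. destruct (constructive_indefinite_description _ _) as [H HH]. exact HH. Qed.

Definition tgt (s : nat) : nat := fst (dec (S (v s))).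
Definition act (s : nat) : Prop := (1 <= s)%nat /\ (Hf (tgt s) <= S (v s))%nat.
Definition inblk (s : nat) (m : Z) : Prop :=
  act s /\ (Z.abs (m - Z.of_nat (spos s)) <= Z.of_nat (Nw (tgt s)))%Z.

Lemma act_sep s s' : act s -> act s' -> (s < s')%nat ->
  (spos s + Hf (tgt s) + Hf (tgt s') <= spos s')%nat.
Proof. intros [_ H1] [_ H2] Hl. pose proof (pos_sep s s' Hl). lia. Qed.

Lemma act_pos s : act s -> (Hf (tgt s) + 1 <= spos s)%nat.
Proof.
  intros [H1 H2]. pose proof (pos_sep 0 s ltac:(lia)). simpl in H. lia.
Qed.

Lemma Hf_ge t : (Nw t + 1 <= Hf t)%nat.
Proof. apply (proj1 (Hf_spec t)). Qed.

Lemma inblk_uniq s s' m : inblk s m -> inblk s' m -> s = s'.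
Proof.
  intros [A1 B1] [A2 B2].
  pose proof (Hf_ge (tgt s)). pose proof (Hf_ge (tgt s')).
  destruct (Nat.lt_total s s') as [Hl|[He|Hl]]; [|exact He|].
  - pose proof (act_sep s s' A1 A2 Hl). lia.
  - pose proof (act_sep s' s A2 A1 Hl). lia.
Qed.

Definition yv (m : Z) : R :=
  match excluded_middle_informative (exists s, inblk s m) with
  | left h => let s := proj1_sig (constructive_indefinite_description _ h) in
      xv (tgt s) (m - Z.of_nat (spos s))%Z / Pi w (m - Z.of_nat (spos s))%Z (spos s)
  | right _ => 0
  end.

Lemma yv_in s m : inblk s m ->
  yv m = xv (tgt s) (m - Z.of_nat (spos s))%Z / Pi w (m - Z.of_nat (spos s))%Z (spos s).
Proof.
  intros H. unfold yv. destruct (excluded_middle_informative _) as [h|h].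
  - destruct (constructive_indefinite_description _ h) as [s' Hs']. simpl.
    rewrite (inblk_uniq s' s m Hs' H). reflexivity.
  - exfalso; apply h; exists s; exact H.
Qed.

Lemma yv_out m : ~ (exists s, inblk s m) -> yv m = 0.
Proof.
  intros H. unfold yv. destruct (excluded_middle_informative _) as [h|h]; [contradiction|reflexivity].
Qed.

Lemma abs_div_le x p : 0 < p -> Rabs x <= p -> Rabs (x / p) <= 1.
Proof.
  intros Hp Hx. unfold Rdiv. rewrite Rabs_mult, Rabs_inv, (Rabs_right p) by lra.
  apply (Rmult_le_reg_r p); [lra|]. rewrite Rmult_assoc, Rinv_l by lra. lra.
Qed.

Lemma yv_bound m : Rabs (yv m) <= 1.
Proof.
  destruct (classic (exists s, inblk s m)) as [[s Hs]|Hn].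
  - rewrite (yv_in s m Hs). destruct Hs as [Ha Hb].
    apply abs_div_le; [apply Pi_pos; exact wpos|].
    apply (proj2 (Hf_spec (tgt s)) _ Hb). pose proof (act_pos s Ha). lia.
  - rewrite (yv_out m Hn), Rabs_R0. lra.
Qed.

Lemma orbit_in s k : act s -> (Z.abs k <= Z.of_nat (Nw (tgt s)))%Z ->
  Nat.iter (spos s) (bi_shift w) yv k = xv (tgt s) k.
Proof.
  intros Ha Hk. rewrite iter_bi.
  rewrite (yv_in s (k + Z.of_nat (spos s))%Z).
  2:{ split; [exact Ha|]. replace (k + Z.of_nat (spos s) - Z.of_nat (spos s))%Z with k by lia. exact Hk. }
  replace (k + Z.of_nat (spos s) - Z.of_nat (spos s))%Z with k by lia.
  pose proof (Pi_pos w wpos k (spos s)). field. lra.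
Qed.

Lemma orbit_out s k : act s -> (Z.of_nat (Nw (tgt s)) < Z.abs k)%Z ->
  Rabs (Nat.iter (spos s) (bi_shift w) yv k) <= 1.
Proof.
  intros Ha Hk. rewrite iter_bi. set (n := spos s).
  destruct (classic (exists s', inblk s' (k + Z.of_nat n)%Z)) as [[s' Hs']|Hno].
  2:{ rewrite (yv_out _ Hno), Rmult_0_r, Rabs_R0. lra. }
  rewrite (yv_in s' _ Hs'). set (n' := spos s'). set (t' := tgt s').
  set (k' := (k + Z.of_nat n - Z.of_nat n')%Z).
  destruct Hs' as [Ha' Hb']. fold n' t' k' in Hb'.
  pose proof (Hf_spec t') as [_ Hsp]. specialize (Hsp k' Hb').
  pose proof (Pi_pos w wpos) as Pp.
  destruct (Nat.lt_total s s') as [Hl|[He|Hl]].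
  - pose proof (act_sep s s' Ha Ha' Hl) as Hsep. fold n n' t' in Hsep.
    set (dd := (n' - n)%nat).
    destruct (Hsp dd ltac:(unfold dd; lia)) as [Hc _].
    assert (E : Pi w k' n' = Pi w k' dd * Pi w k n).
    { replace n' with (dd + n)%nat at 1 by (unfold dd; lia). rewrite Pi_add.
      f_equal. apply Pi_eq. unfold k', dd. lia. }
    rewrite E.
    replace (Pi w k n * (xv t' k' / (Pi w k' dd * Pi w k n))) with (xv t' k' / Pi w k' dd).
    2:{ pose proof (Pp k n); pose proof (Pp k' dd). field. lra. }
    apply abs_div_le; [apply Pp| exact Hc].
  - subst s'. exfalso. unfold k', n', n in Hb'. fold t' in Hk. unfold t' in *.
    replace (k + Z.of_nat (spos s) - Z.of_nat (spos s))%Z with k in Hb' by lia. lia.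
  - pose proof (act_sep s' s Ha' Ha Hl) as Hsep. fold n n' t' in Hsep.
    set (dd := (n - n')%nat).
    destruct (Hsp dd ltac:(unfold dd; lia)) as [_ Hc].
    assert (E : Pi w k n = Pi w (k' - Z.of_nat dd) dd * Pi w k' n').
    { replace n with (dd + n')%nat at 1 by (unfold dd; lia). rewrite Pi_add.
      f_equal; apply Pi_eq; unfold k', dd; lia. }
    rewrite E.
    replace (Pi w (k' - Z.of_nat dd) dd * Pi w k' n' * (xv t' k' / Pi w k' n'))
      with (xv t' k' * Pi w (k' - Z.of_nat dd) dd).
    2:{ pose proof (Pp k' n'). field. lra. }
    rewrite Rabs_mult, (Rabs_right (Pi w _ _)) by (left; apply Pp). exact Hc.
Qed.

End Core.

Lemma spos_lt s s' : (s < s')%nat -> (spos s < spos s')%nat.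
Proof. intros H. pose proof (pos_sep s s' H). lia. Qed.

Lemma zenum_abs j : (Z.abs (zenum j) <= Z.of_nat j)%Z.
Proof.
  unfold zenum. destruct (Nat.even j) eqn:E.
  - pose proof (Nat.Div0.div_le_upper_bound j 2 j ltac:(lia)). lia.
  - assert (j <> 0%nat) by (intro; subst; discriminate).
    pose proof (Nat.Div0.div_le_upper_bound (j + 1) 2 j ltac:(lia)). lia.
Qed.

Section Dens.
Variable w : Z -> R.
Hypothesis wpos : forall n, 0 < w n.
Hypothesis hplus : cv_infty (Pi w 0).
Hypothesis hminus : Un_cv (negp w) 0.

Definition Aset (t : nat) (n : nat) : Prop :=
  exists s, act w wpos hplus hminus s /\ tgt s = t /\ spos s = n.

Lemma density t : pos_lower_density (Aset t).
Proof.
  set (c := (2 ^ t * (2 * Hf w wpos hplus hminus t + 1) - 1)%nat).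
  set (C := (2 ^ c)%nat).
  assert (HC : (1 <= C)%nat) by (unfold C; pose proof (Nat.pow_nonzero 2 c); lia).
  set (sm := fun m => (C * (2 * m + 1))%nat).
  assert (Hin : forall m, Aset t (spos (sm m))).
  { intro m. exists (sm m). unfold sm, C.
    assert (Hv : v (2 ^ c * (2 * m + 1)) = c) by apply v_spec.
    assert (Ht : tgt (2 ^ c * (2 * m + 1)) = t).
    { unfold tgt. rewrite Hv. unfold c. rewrite S_pow_pred, dec_spec. reflexivity. }
    split; [|split; [exact Ht|reflexivity]].
    split; [pose proof (Nat.pow_nonzero 2 c); nia|].
    rewrite Ht, Hv. unfold c. rewrite S_pow_pred.
    pose proof (Nat.pow_nonzero 2 t). nia. }
  assert (Hcnt : forall m, (m + 1 <= card_upto (Aset t) (spos (sm m)))%nat).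
  { induction m as [|m IH].
    - assert (Hlt : (0 < spos (sm 0%nat))%nat).
      { pose proof (spos_lt 0 (sm 0%nat) ltac:(unfold sm; nia)) as H0.
        change (spos 0) with 0%nat in H0. exact H0. }
      pose proof (cu_step (Aset t) 0 (spos (sm 0%nat)) Hlt (Hin 0%nat)) as H.
      change (card_upto (Aset t) 0) with 0%nat in H. lia.
    - pose proof (cu_step (Aset t) (spos (sm m)) (spos (sm (S m)))) as H.
      specialize (H (spos_lt (sm m) (sm (S m)) ltac:(unfold sm; nia)) (Hin (S m))). lia. }
  exists (1 / INR (16 * C)). split.
  { apply Rdiv_lt_0_compat; [lra| apply lt_0_INR; lia]. }
  exists (16 * C)%nat. intros N HN _.
  set (q := (N / (8 * C))%nat).
  pose proof (Nat.div_mod N (8 * C) ltac:(lia)) as Hdm.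
  pose proof (Nat.mod_upper_bound N (8 * C) ltac:(lia)) as Hmb.
  fold q in Hdm.
  assert (Hq2 : (2 <= q)%nat) by nia.
  assert (Hpm : (spos (sm (q - 1)%nat) <= N)%nat).
  { pose proof (pos_le4 (sm (q - 1)%nat)). unfold sm in *. nia. }
  assert (Hcard : (q <= card_upto (Aset t) N)%nat).
  { pose proof (Hcnt (q - 1)%nat). pose proof (cu_monoN (Aset t) _ _ Hpm). lia. }
  assert (HNq : (N <= 16 * C * q)%nat) by nia.
  apply le_INR in Hcard. apply le_INR in HNq.
  assert (HN0 : 0 < INR N) by (apply lt_0_INR; lia).
  assert (HC0 : 0 < INR (16 * C)) by (apply lt_0_INR; lia).
  rewrite mult_INR in HNq.
  apply (Rmult_le_reg_r (INR N * INR (16 * C))); [apply Rmult_lt_0_compat; lra|].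
  replace (1 / INR (16 * C) * (INR N * INR (16 * C))) with (INR N) by (field; lra).
  replace (INR (card_upto (Aset t) N) / INR N * (INR N * INR (16 * C)))
    with (INR (card_upto (Aset t) N) * INR (16 * C)) by (field; lra).
  nra.
Qed.

Theorem bilateral_fhc : freq_hypercyclic_weak_star zenum (bi_shift w).
Proof.
  exists (yv w wpos hplus hminus). split.
  { exists 1. apply yv_bound. }
  intros U [HUb HUn] [z0 Hz0].
  destruct (HUb z0 Hz0) as [M HM].
  set (Mn := Z.to_nat (up (Rabs M))).
  assert (HMn : forall k, Rabs (z0 k) <= INR Mn).
  { intro k. destruct (archimed (Rabs M)) as [H1 _].
    pose proof (Rabs_pos M).
    assert (0 <= up (Rabs M))%Z by (apply le_IZR; lra).
    unfold Mn. rewrite INR_Zto_nat by assumption.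
    pose proof (HM k). pose proof (Rle_abs M). lra. }
  destruct (HUn z0 Hz0) as [As [eps [He [HF Hnb]]]].
  destruct (tailL zenum (2 * INR Mn + 1) eps As HF) as [J [d0 [Hd0 Htl]]].
  { pose proof (pos_INR Mn); lra. } { exact He. }
  destruct (approx z0 Mn J (Rmin d0 1)) as [t [HJ Hx]].
  { apply Rmin_pos; lra. } { exact HMn. }
  apply pld_mono with (A := Aset t); [|apply density].
  intros n [s [Ha [Ht <-]]].
  assert (Hwin : forall k, (Z.abs k <= Z.of_nat (Nw t))%Z ->
     Rabs (Nat.iter (spos s) (bi_shift w) (yv w wpos hplus hminus) k - z0 k) < Rmin d0 1).
  { intros k Hk. rewrite orbit_in by (try rewrite Ht; assumption). rewrite Ht. apply Hx, Hk. }
  assert (Hbd : forall k, Rabs (Nat.iter (spos s) (bi_shift w) (yv w wpos hplus hminus) k) <= INR Mn + 1).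
  { intro k. destruct (Z_le_gt_dec (Z.abs k) (Z.of_nat (Nw t))) as [Hk|Hk].
    - specialize (Hwin k Hk). pose proof (Rmin_r d0 1). pose proof (HMn k).
      pose proof (Rabs_triang_inv (Nat.iter (spos s) (bi_shift w) (yv w wpos hplus hminus) k) (z0 k)).
      lra.
    - pose proof (orbit_out w wpos hplus hminus s k Ha ltac:(rewrite Ht; lia)).
      pose proof (pos_INR Mn). lra. }
  apply Hnb.
  { exists (INR Mn + 1). exact Hbd. }
  intros a Ha'. apply Htl; [|intros j Hj|exact Ha'].
  - intro i. eapply Rle_trans; [apply Rabs_triang|]. rewrite Rabs_Ropp.
    pose proof (Hbd i); pose proof (HMn i). lra.
  - eapply Rlt_le_trans; [apply Hwin| apply Rmin_l].
    pose proof (zenum_abs j). lia.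
Qed.

End Dens.

Definition intl (u : nat -> R) (k : nat) : R := if Nat.even k then u (k / 2)%nat else 0.

Lemma intl_sum2 u m : sum_f_R0 (intl u) (2 * m) = sum_f_R0 u m /\
                      sum_f_R0 (intl u) (2 * m + 1) = sum_f_R0 u m.
Proof.
  induction m as [|m [IH1 IH2]].
  - simpl. unfold intl. simpl. split; ring.
  - assert (E : sum_f_R0 (intl u) (2 * S m) = sum_f_R0 u (S m)).
    { replace (2 * S m)%nat with (S (2 * m + 1)) by lia.
      change (sum_f_R0 (intl u) (S (2 * m + 1))) with
        (sum_f_R0 (intl u) (2 * m + 1) + intl u (S (2 * m + 1))).
      rewrite IH2. unfold intl. replace (S (2 * m + 1)) with (2 * S m)%nat by lia.
      rewrite Nat.even_even. rewrite Nat.mul_comm, Nat.div_mul by lia. reflexivity. }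
    split; [exact E|].
    replace (2 * S m + 1)%nat with (S (2 * S m)) by lia.
    change (sum_f_R0 (intl u) (S (2 * S m))) with
      (sum_f_R0 (intl u) (2 * S m) + intl u (S (2 * S m))).
    rewrite E. unfold intl. replace (S (2 * S m)) with (2 * S m + 1)%nat by lia.
    rewrite Nat.even_odd. ring.
Qed.

Lemma intl_sum u n : sum_f_R0 (intl u) n = sum_f_R0 u (n / 2)%nat.
Proof.
  destruct (Nat.Even_or_Odd n) as [[m ->]|[m ->]].
  - rewrite (proj1 (intl_sum2 u m)). rewrite Nat.mul_comm, Nat.div_mul by lia. reflexivity.
  - rewrite (proj2 (intl_sum2 u m)). f_equal.
    replace (2 * m + 1)%nat with (1 + m * 2)%nat by lia. rewrite Nat.div_add by lia. reflexivity.
Qed.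

Lemma intl_to u L : infinite_sum u L -> infinite_sum (intl u) L.
Proof.
  intros H eps He. destruct (H eps He) as [N HN]. exists (2 * N)%nat. intros n Hn.
  rewrite intl_sum. apply HN.
  pose proof (Nat.Div0.div_le_mono (2 * N) n 2 Hn). rewrite Nat.mul_comm, Nat.div_mul in H0 by lia.
  lia.
Qed.

Lemma intl_from u L : infinite_sum (intl u) L -> infinite_sum u L.
Proof.
  intros H eps He. destruct (H eps He) as [N HN]. exists N. intros n Hn.
  specialize (HN (2 * n)%nat ltac:(lia)). rewrite intl_sum in HN.
  rewrite Nat.mul_comm, Nat.div_mul in HN by lia. exact HN.
Qed.

Lemma isum_ext f g L : (forall k, f k = g k) -> infinite_sum f L -> infinite_sum g L.
Proof.
  intros Hfg H eps He. destruct (H eps He) as [N HN]. exists N. intros n Hn.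
  rewrite <- (sum_eq f g n) by (intros; apply Hfg). apply HN, Hn.
Qed.

Definition extz (a : nat -> R) (n : Z) : R := if (0 <=? n)%Z then a (Z.to_nat n) else 0.

Lemma extz_zenum a k : extz a (zenum k) = intl a k.
Proof.
  unfold extz, zenum, intl. destruct (Nat.even k) eqn:E.
  - replace (0 <=? Z.of_nat (k / 2))%Z with true by (symmetry; apply Z.leb_le; lia).
    rewrite Nat2Z.id. reflexivity.
  - assert (k <> 0%nat) by (intro; subst; discriminate).
    assert (1 <= (k + 1) / 2)%nat.
    { apply Nat.div_le_lower_bound; lia. }
    replace (0 <=? - Z.of_nat ((k + 1) / 2))%Z with false by (symmetry; apply Z.leb_gt; lia).
    reflexivity.
Qed.

Lemma zenum_even k : Nat.even k = true -> zenum k = Z.of_nat (k / 2).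
Proof. unfold zenum. intros ->. reflexivity. Qed.

Lemma zenum_odd k : Nat.even k = false -> (zenum k < 0)%Z.
Proof.
  unfold zenum. intros E. rewrite E.
  assert (k <> 0%nat) by (intro; subst; discriminate).
  assert (1 <= (k + 1) / 2)%nat by (apply Nat.div_le_lower_bound; lia). lia.
Qed.

Definition Rz (y : Z -> R) (k : nat) : R := y (Z.of_nat k).

Section Uni.
Variable w : nat -> R.
Hypothesis wpos : forall k, 0 < w k.
Definition wZ (n : Z) : R := if (0 <? n)%Z then w (Z.to_nat n) else 1 / 2.

Lemma wZ_pos n : 0 < wZ n.
Proof. unfold wZ. destruct (0 <? n)%Z; [apply wpos| lra]. Qed.

Lemma iter_R n (y : Z -> R) k :
  Nat.iter n (uni_shift w) (Rz y) k = Nat.iter n (bi_shift wZ) y (Z.of_nat k).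
Proof.
  revert k; induction n as [|n IH]; intros k; [reflexivity|].
  simpl. unfold uni_shift, bi_shift. rewrite IH.
  replace (Z.of_nat k + 1)%Z with (Z.of_nat (S k)) by lia.
  unfold wZ. replace (0 <? Z.of_nat (S k))%Z with true by (symmetry; apply Z.ltb_lt; lia).
  rewrite Nat2Z.id. reflexivity.
Qed.

Lemma iter_R_fun n y : Nat.iter n (uni_shift w) (Rz y) = Rz (Nat.iter n (bi_shift wZ) y).
Proof. apply functional_extensionality. intro k. apply iter_R. Qed.

Lemma transfer : freq_hypercyclic_weak_star zenum (bi_shift wZ) ->
  freq_hypercyclic_weak_star (fun k : nat => k) (uni_shift w).
Proof.
  intros [y [Hy HT]]. exists (Rz y). split.
  { destruct Hy as [M HM]. exists M. intro i. apply HM. }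
  intros U [HUb HUn] [z0 Hz0].
  set (V := fun z : Z -> R => is_linf z /\ U (Rz z)).
  assert (HV : weak_star_open zenum V).
  { split; [intros z [Hz _]; exact Hz|].
    intros z [Hzb HzU]. destruct (HUn _ HzU) as [As [eps [He [HF Hnb]]]].
    exists (map extz As), eps. split; [exact He|]. split.
    - apply Forall_map. eapply Forall_impl; [|exact HF].
      intros a [L HL]. exists L. apply intl_to in HL. revert HL. apply isum_ext.
      intro k. unfold intl. rewrite extz_zenum. unfold intl.
      destruct (Nat.even k); [reflexivity| symmetry; apply Rabs_R0].
    - intros z' Hz'b Hz'p. split; [exact Hz'b|]. apply Hnb.
      { destruct Hz'b as [M HM]. exists M. intro i. apply HM. }
      intros a Ha. destruct (Hz'p (extz a) (in_map extz As a Ha)) as [l [Hl Hla]].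
      exists l. split; [|exact Hla].
      apply intl_from. revert Hl. apply isum_ext. intro k.
      rewrite extz_zenum. unfold intl, Rz. destruct (Nat.even k) eqn:E.
      + rewrite (zenum_even k E). reflexivity.
      + ring. }
  destruct (HUb z0 Hz0) as [M HM].
  assert (HV0 : V (extz z0)).
  { split.
    - exists (Rmax M 0). intro n. unfold extz. destruct (0 <=? n)%Z.
      + eapply Rle_trans; [apply HM| apply Rmax_l].
      + rewrite Rabs_R0. apply Rmax_r.
    - replace (Rz (extz z0)) with z0; [exact Hz0|].
      apply functional_extensionality. intro k. unfold Rz, extz.
      replace (0 <=? Z.of_nat k)%Z with true by (symmetry; apply Z.leb_le; lia).
      rewrite Nat2Z.id. reflexivity. }
  apply pld_mono with (A := fun n => V (Nat.iter n (bi_shift wZ) y)).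
  - intros n [_ HU]. rewrite iter_R_fun. exact HU.
  - apply HT; [exact HV| exists (extz z0); exact HV0].
Qed.
End Uni.

Lemma prod_first_ext f g m : (forall k, f k = g k) -> prod_first f m = prod_first g m.
Proof. intros H; induction m; simpl; [reflexivity| rewrite IHm, H; reflexivity]. Qed.

Lemma prod_first_shift (w : nat -> R) m :
  prod_first w (S m) = w 0%nat * prod_first (fun k => w (S k)) m.
Proof.
  induction m as [|m IH]; [simpl; ring|].
  change (prod_first w (S (S m))) with (prod_first w (S m) * w (S m)).
  rewrite IH. simpl. ring.
Qed.

Lemma bil_from_hyp (w : Z -> R) (wpos : forall n, 0 < w n) :
  cv_infty (prod_first (fun k => w (Z.of_nat (S k)))) ->
  Un_cv (prod_first (fun k => w (- Z.of_nat (S k))%Z)) 0 ->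
  freq_hypercyclic_weak_star zenum (bi_shift w).
Proof.
  intros Hp Hm.
  assert (hplus : cv_infty (Pi w 0)).
  { intros M. destruct (Hp M) as [N HN]. exists N. intros n Hn.
    rewrite <- prod_pos_eq. apply HN, Hn. }
  assert (hminus : Un_cv (negp w) 0).
  { intros eps He. destruct (Hm eps He) as [N HN]. exists N. intros n Hn.
    rewrite <- prod_neg_eq. apply HN, Hn. }
  exact (bilateral_fhc w wpos hplus hminus).
Qed.

Theorem proposition4p9 :
  (* (1) unilateral shift on l^oo(N) *)
  (forall w : nat -> R,
     (forall k, 0 < w k) ->
     (exists M, forall k, w k <= M) ->
     cv_infty (prod_first w) ->
     freq_hypercyclic_weak_star (fun k : nat => k) (uni_shift w))
  /\
  (* (2) bilateral shift on l^oo(Z) *)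
  (forall w : Z -> R,
     (forall n, 0 < w n) ->
     (exists M, forall n, w n <= M) ->
     cv_infty (prod_first (fun k => w (Z.of_nat (S k)))) ->
     Un_cv (prod_first (fun k => w (- Z.of_nat (S k))%Z)) 0 ->
     freq_hypercyclic_weak_star zenum (bi_shift w)).
Proof.
  split.
  - intros w wpos _ Hcv. apply (transfer w).
    apply bil_from_hyp; [apply wZ_pos, wpos| |].
    + intros M. destruct (Hcv (M * w 0%nat)) as [N HN]. exists N. intros n Hn.
      rewrite (prod_first_ext _ (fun k => w (S k))).
      2:{ intro k. unfold wZ. replace (0 <? Z.of_nat (S k))%Z with true
            by (symmetry; apply Z.ltb_lt; lia). rewrite Nat2Z.id. reflexivity. }
      specialize (HN (S n) ltac:(lia)). rewrite prod_first_shift in HN.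
      pose proof (wpos 0%nat).
      apply (Rmult_lt_reg_l (w 0%nat)); [lra|]. lra.
    + rewrite (functional_extensionality _ (fun m => (1/2) ^ m)).
      2:{ intro m. induction m as [|m IH]; [reflexivity|].
          change (prod_first (fun k => wZ w (- Z.of_nat (S k))) (S m)) with
            (prod_first (fun k => wZ w (- Z.of_nat (S k))) m * wZ w (- Z.of_nat (S m))).
          change ((1/2) ^ (S m)) with (1/2 * (1/2) ^ m).
          rewrite IH. unfold wZ.
          replace (0 <? - Z.of_nat (S m))%Z with false by (symmetry; apply Z.ltb_ge; lia).
          ring. }
      intros eps He. destruct (pow_lt_1_zero (1/2) ltac:(rewrite Rabs_right; lra) eps He)
        as [N HN]. exists N. intros n Hn. unfold Rdist. rewrite Rminus_0_r. apply HN, Hn.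
  - intros w wpos _. apply bil_from_hyp, wpos.
Qed.
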